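(* Let $\rho$ be a valid state of an $(m,n)$-composite, and consider a sub-collection consisting of $m'\le m$ of its dits and $n'\le n$ of its anti-dits (an $(m',n')$-composite). Let $P$ be any operator belonging to a valid measurement on this $(m',n')$-composite. Then the operator $\sigma=\mathrm{Tr}_{\text{measured}}\big[(P\otimes I)\rho\big]$ on the remaining $m-m'$ dits and $n-n'$ anti-dits (where the partial trace is over the measured $m'$ dits and $n'$ anti-dits and $I$ is the identity on the remaining systems) is either zero or a positive multiple of a valid state of the remaining $(m-m',n-n')$-composite. In particular (taking $P=I$), every marginal of a valid state is a valid state.
   Context: Fix an integer $d\ge 2$. A dit $D$ and an anti-dit $A$ are each associated with $\mathbb C^d$ with computational orthonormal basis $\{|0\rangle,\dots,|d-1\rangle\}$; $\oplus$ denotes addition modulo $d$. An $(m,n)$-composite consists of $m$ dits $D_1,\dots,D_m$ and $n$ anti-dits $A_1,\dots,A_n$, with Hilbert space $(\mathbb C^d)^{\otimes m}\otimes(\mathbb C^d)^{\otimes n}$. For a dit $D_i$, an anti-dit $A_j$ and $k\in\{0,\dots,d-1\}$, let $\Pi_k^{D_iA_j}$ be the orthogonal projector onto $\mathrm{span}\{|s\rangle_{D_i}|s\oplus k\rangle_{A_j}: s=0,\dots,d-1\}$. Pure states: if $m\le n$, a pure state of the $(m,n)$-composite is a unit vector of the form $(U\otimes W)(|\Psi'\rangle\otimes|\mathbf r\rangle)$, where $U$ is a unitary permuting the tensor factors of the $m$ dits, $W$ a unitary permuting the tensor factors of the $n$ anti-dits, $|\mathbf r\rangle$ a computational-basis product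 vector of anti-dits $A_{m+1},\dots,A_n$, and $|\Psi'\rangle$ a unit vector of $D_1\cdots D_mA_1\cdots A_m$ with $(\Pi_{k_1}^{D_1A_1}\otimes\cdots\otimes\Pi_{k_m}^{D_mA_m})|\Psi'\rangle=|\Psi'\rangle$ for some $k_1,\dots,k_m$. If $m\ge n$, the same with roles of dits and anti-dits exchanged (a computational-basis product vector on the $m-n$ extra dits). The $(0,0)$-composite is the trivial system $\mathbb C$. Valid states are density matrices that are finite convex combinations of projectors onto pure states. A valid measurement on an $(m,n)$-composite is a POVM $\{P_i\}$ ($P_i\ge 0$, $\sum_iP_i=I$) in which each $P_i$ is a linear combination with nonnegative coefficients of projectors $|\Psi\rangle\langle\Psi|$ onto pure states of that composite; outcome probabilities are $\mathrm{Tr}[P_i\rho]$. *)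

(* Defs.v *)
From mathcomp Require Import all_boot all_order all_algebra all_fingroup all_field.
Set Implicit Arguments. Unset Strict Implicit. Unset Printing Implicit Defensive.
Import Order.TTheory GRing.Theory Num.Theory.
Local Open Scope ring_scope.

(* Computational basis of an (m,n)-composite of dits/anti-dits of dimension d:
   a basis label is a pair (s, a) with s i = value of dit D_(i+1) and
   a j = value of anti-dit A_(j+1). *)
Notation basis d m n := ({ffun 'I_m -> 'I_d} * {ffun 'I_n -> 'I_d})%type.

Definition vec (d m n : nat) := basis d m n -> algC.
Definition op (d m n : nat) := basis d m n -> basis d m n -> algC.

Definition unit_vec d m n (v : vec d m n) : Prop := \sum_(z : basis d m n) `|v z| ^+ 2 = 1.

Definition apply_op d m n (A : op d m n) (v : vec d m n) : vec d m n :=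
  fun z => \sum_(w : basis d m n) A z w * v w.

Definition mulop d m n (A B : op d m n) : op d m n :=
  fun z w => \sum_(u : basis d m n) A z u * B u w.

Definition outer d m n (v : vec d m n) : op d m n := fun z w => v z * (v w)^*.

Definition psd d m n (A : op d m n) : Prop :=
  forall v : vec d m n, 0 <= \sum_(z : basis d m n) \sum_(w : basis d m n) (v z)^* * A z w * v w.

(* Pi_k^{DA} on C^d (x) C^d, matrix entry <s,a| Pi_k |s',a'>:
   projector onto span{ |s>|s (+) k> }. *)
Definition Pi1 (d : nat) (k : 'I_d) (s a s' a' : 'I_d) : algC :=
  ((s == s') && (a == a') && (val a == (val s + val k) %% d)%N)%:R.

Definition pair_proj d p (k : 'I_p -> 'I_d) : op d p p :=
  fun z w => \prod_(i < p) Pi1 (k i) (z.1 i) (z.2 i) (w.1 i) (w.2 i).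

(* (U (x) W) v, U permuting dit factors by sigma, W anti-dit factors by tau. *)
Definition permvec d m n (sigma : 'S_m) (tau : 'S_n) (v : vec d m n) : vec d m n :=
  fun z => v ([ffun i => z.1 (sigma i)], [ffun j => z.2 (tau j)]).

(* Psi' (x) |r> : Psi' on D_1..D_p A_1..A_p (p = min m n), the remaining
   (dits or anti-dits, whichever are in excess) in computational basis states
   rD / rA (only the values at indices >= p are used). *)
Definition extend_basis d m n (Phi : vec d (minn m n) (minn m n))
    (rD : 'I_m -> 'I_d) (rA : 'I_n -> 'I_d) : vec d m n :=
  fun w => Phi ([ffun i => w.1 (widen_ord (geq_minl m n) i)],
                [ffun j => w.2 (widen_ord (geq_minr m n) j)])
           * ([forall i : 'I_m, (minn m n <= i)%N ==> (w.1 i == rD i)] &&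
              [forall j : 'I_n, (minn m n <= j)%N ==> (w.2 j == rA j)])%:R.

Definition is_pure d m n (psi : vec d m n) : Prop :=
  unit_vec psi /\
  exists (sigma : 'S_m) (tau : 'S_n) (k : 'I_(minn m n) -> 'I_d)
         (Phi : vec d (minn m n) (minn m n)) (rD : 'I_m -> 'I_d) (rA : 'I_n -> 'I_d),
    (forall z, apply_op (pair_proj k) Phi z = Phi z) /\
    (forall z, psi z = permvec sigma tau (extend_basis Phi rD rA) z).

Definition valid_state d m n (rho : op d m n) : Prop :=
  exists (N : nat) (w : 'I_N -> algC) (psi : 'I_N -> vec d m n),
    (forall i, 0 <= w i) /\ \sum_(i < N) w i = 1 /\ (forall i, is_pure (psi i)) /\
    (forall z z', rho z z' = \sum_(i < N) w i * outer (psi i) z z').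

Definition in_pure_cone d m n (P : op d m n) : Prop :=
  exists (M : nat) (c : 'I_M -> algC) (psi : 'I_M -> vec d m n),
    (forall j, 0 <= c j) /\ (forall j, is_pure (psi j)) /\
    (forall z z', P z z' = \sum_(j < M) c j * outer (psi j) z z').

Definition valid_measurement d m n (N : nat) (Ps : 'I_N -> op d m n) : Prop :=
  (forall i, psd (Ps i)) /\
  (forall z z', \sum_(i < N) Ps i z z' = (z == z')%:R) /\
  (forall i, in_pure_cone (Ps i)).

Definition measurement_element d m n (P : op d m n) : Prop :=
  exists (N : nat) (Ps : 'I_N -> op d m n) (i : 'I_N),
    valid_measurement Ps /\ (forall z z', P z z' = Ps i z z').

Definition restr d m n m1 n1 (eD : 'I_m1 -> 'I_m) (eA : 'I_n1 -> 'I_n)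
    (z : basis d m n) : basis d m1 n1 :=
  ([ffun i => z.1 (eD i)], [ffun j => z.2 (eA j)]).

Definition tensor_id d m n m1 n1 m2 n2 (P : op d m1 n1)
    (eD : 'I_m1 -> 'I_m) (eA : 'I_n1 -> 'I_n) (cD : 'I_m2 -> 'I_m) (cA : 'I_n2 -> 'I_n)
    : op d m n :=
  fun z u => P (restr eD eA z) (restr eD eA u) * (restr cD cA z == restr cD cA u)%:R.

Definition ptrace d m n m1 n1 m2 n2 (X : op d m n)
    (eD : 'I_m1 -> 'I_m) (eA : 'I_n1 -> 'I_n) (cD : 'I_m2 -> 'I_m) (cA : 'I_n2 -> 'I_n)
    : op d m2 n2 :=
  fun y y' => \sum_(z : basis d m n) \sum_(w : basis d m n)
     ((restr cD cA z == y) && (restr cD cA w == y') && (restr eD eA z == restr eD eA w))%:R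
     * X z w.

(* Main.v *)
Require Import Defs.
From mathcomp Require Import all_boot all_order all_algebra all_fingroup all_field.
Import Order.TTheory GRing.Theory Num.Theory.
Local Open Scope ring_scope.
From mathcomp Require Import ring.
Set Implicit Arguments. Unset Strict Implicit. Unset Printing Implicit Defensive.

Section Pat.
Variables (G : zmodType) (Dt At : finType).

Implicit Types (UD : pred Dt) (UA : pred At).

Record pat := Pat { md : Dt -> option At; od : Dt -> G; oa : At -> G }.

Definition wf (UD : pred Dt) (UA : pred At) (P : pat) : Prop :=
  (forall i j, UD i -> md P i = Some j -> UA j) /\
  (forall i i' j, UD i -> UD i' -> md P i = Some j -> md P i' = Some j -> i = i').

Definition good (UD : pred Dt) (UA : pred At) (P : pat) (z : (Dt -> G) * (At -> G)) : Prop :=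
  (forall i, UD i -> match md P i with Some j => z.2 j = z.1 i + od P i | None => z.1 i = od P i end) /\
  (forall j, UA j -> (forall i, UD i -> md P i <> Some j) -> z.2 j = oa P j).

Lemma wf_ext UD UD' UA UA' (P : pat) : UD =1 UD' -> UA =1 UA' -> wf UD UA P -> wf UD' UA' P.
Proof.
move=> eD eA [h1 h2]; split.
  by move=> i j; rewrite -eD -eA; apply: h1.
by move=> i i' j; rewrite -!eD; apply: h2.
Qed.

Lemma good_ext UD UD' UA UA' (P : pat) z : UD =1 UD' -> UA =1 UA' -> good UD UA P z -> good UD' UA' P z.
Proof.
move=> eD eA [h1 h2]; split.
  by move=> i; rewrite -eD; apply: h1.
move=> j; rewrite -eA => uj hj; apply: h2 => // i; rewrite eD; apply: hj.
Qed.

Definition step1D (Q : pat) (i : Dt) (c : G) : pat :=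
  Pat (md Q) (od Q) (fun j => if md Q i == Some j then c + od Q i else oa Q j).

Lemma step1D_wf UD UA Q i c : wf UD UA Q -> wf (predD UD (pred1 i)) UA (step1D Q i c).
Proof.
move=> [h1 h2]; split => /=.
  by move=> i0 j /andP[_ u] e; apply: h1 e.
by move=> i0 i1 j /andP[_ u0] /andP[_ u1]; apply: h2.
Qed.

Lemma step1D_good UD UA Q i c z : UD i -> good UD UA Q z -> z.1 i = c ->
  good (predD UD (pred1 i)) UA (step1D Q i c) z.
Proof.
move=> ui [h1 h2] zi; split => /=.
  by move=> i0 /andP[_ u]; apply: h1.
move=> j uj hj; case: eqP => e.
  by have := h1 i ui; rewrite e => ->; rewrite zi.
apply: h2 => // i0 u0 e0; case: (eqVneq i0 i) => [ei|ne].
  by apply: e; rewrite -ei.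
by apply: (hj i0) => //; rewrite /= ne.
Qed.

Definition step1A (Q : pat) (j : At) (c : G) : pat :=
  Pat (fun i => if md Q i == Some j then None else md Q i)
      (fun i => if md Q i == Some j then c - od Q i else od Q i) (oa Q).

Lemma step1A_wf UD UA Q j c : wf UD UA Q -> wf UD (predD UA (pred1 j)) (step1A Q j c).
Proof.
move=> [h1 h2]; split => /=.
  move=> i j0 u; case: eqP => // ne e; rewrite /= (h1 _ _ u e) andbT.
  by apply/eqP => ej; apply: ne; rewrite e ej.
move=> i i' j0 u u'; case: eqP => // _ e; case: eqP => // _ e'.
by apply: h2 e e'.
Qed.

Lemma step1A_good UD UA Q j c z : UA j -> good UD UA Q z -> z.2 j = c ->
  good UD (predD UA (pred1 j)) (step1A Q j c) z.
Proof.
move=> uj [h1 h2] zj; split => /=.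
  move=> i u; have := h1 i u; case: eqP => [->|//].
  by move=> e; rewrite -zj e addrK.
move=> j0 /andP[nj u0] hj; apply: h2 => // i u e.
apply: (hj i u); rewrite e; case: eqP => // [[ej]].
by move: nj; rewrite /= ej eqxx.
Qed.

Definition step2 (Q : pat) (i : Dt) (j : At) (k : G) : pat :=
  Pat (fun x => if md Q x == Some j then md Q i else md Q x)
      (fun x => if md Q x == Some j then
                  (if md Q i is Some _ then od Q x - k + od Q i else od Q i + k - od Q x)
                else od Q x)
      (fun y => if md Q i == Some y then oa Q j - k + od Q i else oa Q y).

Lemma step2_wf UD UA Q i j k : UD i -> wf UD UA Q ->
  wf (predD UD (pred1 i)) (predD UA (pred1 j)) (step2 Q i j k).
Proof.
move=> ui [h1 h2]; split => /=.
  move=> x y /andP[nx ux]; case: eqP => [ex ei|ne e].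
    rewrite (h1 _ _ ui ei) andbT; apply/eqP => ey; move: ei; rewrite ey => ei.
    by move: nx; rewrite /= (h2 _ _ _ ux ui ex ei) eqxx.
  rewrite (h1 _ _ ux e) andbT; apply/eqP => ey; apply: ne; by rewrite e ey.
move=> x x' y /andP[nx ux] /andP[nx' ux']; case: eqP => [ex|nex]; case: eqP => [ex'|nex'].
- by move=> _ _; apply: h2 ex ex'.
- by move=> ei e'; move: nx'; rewrite /= (h2 _ _ _ ux' ui e' ei) eqxx.
- by move=> e ei; move: nx; rewrite /= (h2 _ _ _ ux ui e ei) eqxx.
- by apply: h2.
Qed.

Lemma step2_good UD UA Q i j k z : UD i -> UA j -> wf UD UA Q -> good UD UA Q z ->
  z.2 j = z.1 i + k ->
  good (predD UD (pred1 i)) (predD UA (pred1 j)) (step2 Q i j k) z.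
Proof.
move=> ui uj [w1 w2] [h1 h2] zij; split => /=.
  move=> x /andP[nx ux]; have := h1 x ux; case: eqP => [->|//] hx.
  have := h1 i ui; case: (md Q i) => [y|] hi.
    rewrite hi (_ : z.1 i = z.1 x + od Q x - k); last by rewrite -hx zij addrK.
    by rewrite !addrA.
  by rewrite -hi -zij hx addrK.
move=> y /andP[ny uy] hy; case: eqP => [ei|ne].
  have := h1 i ui; rewrite ei => ->.
  have -> : z.1 i = z.2 j - k by rewrite zij addrK.
  congr (_ - _ + _); apply: h2 => // x ux ex.
  case: (eqVneq x i) => [exi|nxi]; first by move: ei; rewrite -exi ex => -[e]; move: ny; rewrite /= e eqxx.
  by apply: (hy x); rewrite /= ?nxi // ex eqxx.
apply: h2 => // x ux ex; case: (eqVneq x i) => [exi|nxi].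
  by apply: ne; rewrite -exi ex.
apply: (hy x); first by rewrite /= nxi.
case: eqP => [e|_ //]; move: ex; rewrite e => -[e']; by move: ny; rewrite /= e' eqxx.
Qed.

End Pat.

Section Elim.
Variables (G : zmodType) (Dt At : finType).
Implicit Types (UD MD : pred Dt) (UA MA : pred At) (R Q : pat G Dt At).

Lemma card_predD1 (T : finType) (A : pred T) x : A x -> (#|predD A (pred1 x)| < #|A|)%N.
Proof.
move=> Ax; rewrite (cardD1 x A) -[x \in A]/(A x) Ax add1n ltnS; apply: subset_leq_card.
by apply/subsetP => y; rewrite !inE /= andbC.
Qed.

Theorem elim_pat R : forall N MD MA UD UA Q, (#|MD| + #|MA| <= N)%N ->
  {subset MD <= UD} -> {subset MA <= UA} -> wf MD MA R -> wf UD UA Q ->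
  exists Q', wf (predD UD MD) (predD UA MA) Q' /\
    forall z, good MD MA R z -> good UD UA Q z -> good (predD UD MD) (predD UA MA) Q' z.
Proof.
elim=> [|N IH] MD MA UD UA Q hN sD sA wR wQ.
- have e1 : MD =1 pred0 by move=> x; apply/negP => h; move: hN; rewrite (cardD1 x MD) -[x \in MD]/(MD x) h.
  have e2 : MA =1 pred0 by move=> x; apply/negP => h; move: hN; rewrite addnC (cardD1 x MA) -[x \in MA]/(MA x) h.
  have eU : predD UD MD =1 UD by move=> x; rewrite /= e1.
  have eA : predD UA MA =1 UA by move=> x; rewrite /= e2.
  exists Q; split; first by apply: wf_ext wQ => x; rewrite ?eU ?eA.
  by move=> z _ g; apply: good_ext g => x; rewrite ?eU ?eA.
case: (pickP MD) => [i Mi|nD].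
- case eR: (md R i) => [j|].
  + have Mj : MA j by case: wR => h _; apply: h eR.
    have ui : UD i by apply: sD.
    have uj : UA j by apply: sA.
    have [|||||Q' [wQ' hQ']] := IH (predD MD (pred1 i)) (predD MA (pred1 j))
       (predD UD (pred1 i)) (predD UA (pred1 j)) (step2 Q i j (od R i)).
    * rewrite -ltnS; apply: leq_trans hN; rewrite -addSn leq_add //.
        exact: card_predD1. exact: ltnW (card_predD1 Mj).
    * by move=> x; rewrite !inE /= => /andP[a b]; rewrite a /=; apply: sD.
    * by move=> x; rewrite !inE /= => /andP[a b]; rewrite a /=; apply: sA.
    * case: wR => h1 h2; split.
        move=> x y /andP[nx Mx] e; rewrite /= (h1 _ _ Mx e) andbT.
        by apply/eqP => ey; move: e; rewrite ey => e; move: nx; rewrite /= (h2 _ _ _ Mx Mi e eR) eqxx.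
      by move=> x x' y /andP[_ a] /andP[_ b]; apply: h2.
    * exact: step2_wf.
    have eU : predD (predD UD (pred1 i)) (predD MD (pred1 i)) =1 predD UD MD.
      by move=> x; rewrite /=; case: eqP => // ->; rewrite Mi.
    have eA : predD (predD UA (pred1 j)) (predD MA (pred1 j)) =1 predD UA MA.
      by move=> x; rewrite /=; case: eqP => // ->; rewrite Mj.
    exists Q'; split; first exact: wf_ext wQ'.
    move=> z gR gQ; apply: good_ext eU eA _; apply: hQ'.
      case: gR => g1 g2; split; first by move=> x /andP[_ Mx]; apply: g1.
      move=> y /andP[ny My] hy; apply: g2 => // x Mx e.
      case: (eqVneq x i) => [exi|nxi]; first by move: e; rewrite exi eR => -[ey]; move: ny; rewrite /= ey eqxx.
      by apply: (hy x); rewrite /= ?nxi.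
    apply: step2_good => //.
    by case: gR => g1 _; have := g1 i Mi; rewrite eR.
  + have ui : UD i by apply: sD.
    have [|||||Q' [wQ' hQ']] := IH (predD MD (pred1 i)) MA
       (predD UD (pred1 i)) UA (step1D Q i (od R i)).
    * rewrite -ltnS; apply: leq_trans hN; rewrite -addSn leq_add //.
      exact: card_predD1.
    * by move=> x; rewrite !inE /= => /andP[a b]; rewrite a /=; apply: sD.
    * by [].
    * case: wR => h1 h2; split.
        by move=> x y /andP[nx Mx] e; apply: h1 e.
      by move=> x x' y /andP[_ a] /andP[_ b]; apply: h2.
    * exact: step1D_wf.
    have eU : predD (predD UD (pred1 i)) (predD MD (pred1 i)) =1 predD UD MD.
      by move=> x; rewrite /=; case: eqP => // ->; rewrite Mi.
    exists Q'; split; first exact: wf_ext wQ'.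
    move=> z gR gQ; apply: good_ext eU (frefl _) _; apply: hQ'.
      case: gR => g1 g2; split; first by move=> x /andP[_ Mx]; apply: g1.
      move=> y My hy; apply: g2 => // x Mx e.
      case: (eqVneq x i) => [exi|nxi]; first by move: e; rewrite exi eR.
      by apply: (hy x); rewrite /= ?nxi.
    apply: step1D_good => //.
    by case: gR => g1 _; have := g1 i Mi; rewrite eR.
- case: (pickP MA) => [j Mj|nA].
  + have uj : UA j by apply: sA.
    have [|||||Q' [wQ' hQ']] := IH MD (predD MA (pred1 j))
       UD (predD UA (pred1 j)) (step1A Q j (oa R j)).
    * rewrite -ltnS; apply: leq_trans hN; rewrite -addnS leq_add //.
      exact: card_predD1.
    * by [].
    * by move=> x; rewrite !inE /= => /andP[a b]; rewrite a /=; apply: sA.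
    * case: wR => h1 h2; split; last by [].
      by move=> x; rewrite nD.
    * exact: step1A_wf.
    have eA : predD (predD UA (pred1 j)) (predD MA (pred1 j)) =1 predD UA MA.
      by move=> x; rewrite /=; case: eqP => // ->; rewrite Mj.
    exists Q'; split; first exact: wf_ext wQ'.
    move=> z gR gQ; apply: good_ext (frefl _) eA _; apply: hQ'.
      case: gR => g1 g2; split; first by move=> x; rewrite nD.
      by move=> y /andP[_ My] hy; apply: g2.
    apply: step1A_good => //.
    by case: gR => _ g2; apply: g2 => // x; rewrite nD.
  + have eU : predD UD MD =1 UD by move=> x; rewrite /= nD.
    have eA : predD UA MA =1 UA by move=> x; rewrite /= nA.
    exists Q; split; first by apply: wf_ext wQ => x; rewrite ?eU ?eA.
    by move=> z _ g; apply: good_ext g => x; rewrite ?eU ?eA.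
Qed.

End Elim.

Section Transport.
Variables (G : zmodType) (Dt At Dt1 At1 : finType).
Variables (eD : Dt1 -> Dt) (eA : At1 -> At).
Hypotheses (ieD : injective eD) (ieA : injective eA).

Definition rng (T T1 : finType) (f : T1 -> T) : pred T := fun x => x \in codom f.

Definition push (R : pat G Dt1 At1) : pat G Dt At :=
  Pat (fun x => if [pick i | eD i == x] is Some i then omap eA (md R i) else None)
      (fun x => if [pick i | eD i == x] is Some i then od R i else 0)
      (fun y => if [pick j | eA j == y] is Some j then oa R j else 0).

Lemma pick_eD i : [pick i' | eD i' == eD i] = Some i.
Proof.
case: pickP => [i' /eqP e|h]; first by rewrite (ieD e).
by have := h i; rewrite eqxx.
Qed.

Lemma pick_eA j : [pick j' | eA j' == eA j] = Some j.
Proof.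
case: pickP => [j' /eqP e|h]; first by rewrite (ieA e).
by have := h j; rewrite eqxx.
Qed.

Lemma push_wf R : wf predT predT R -> wf (rng eD) (rng eA) (push R).
Proof.
move=> [_ h2]; split.
  move=> x y /codomP[i ->] /=; rewrite pick_eD.
  by case: (md R i) => //= j [<-]; apply: codom_f.
move=> x x' y /codomP[i ->] /codomP[i' ->] /=; rewrite !pick_eD.
case e: (md R i) => [j|] //=; case e': (md R i') => [j'|] //= [<-] [ejj].
by rewrite (h2 i i' j) // e' (ieA ejj).
Qed.

Lemma push_good R z : good predT predT R (fun i => z.1 (eD i), fun j => z.2 (eA j)) ->
  good (rng eD) (rng eA) (push R) z.
Proof.
move=> [g1 g2]; split.
  move=> x /codomP[i ->] /=; rewrite !pick_eD; have := g1 i isT.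
  by case: (md R i).
move=> y /codomP[j ->] h /=; rewrite pick_eA; apply: g2 => // i _ e.
by apply: (h (eD i)); [apply: codom_f | rewrite /= pick_eD e].
Qed.

Definition pull (Q : pat G Dt At) : pat G Dt1 At1 :=
  Pat (fun i => obind (fun j => [pick j' | eA j' == j]) (md Q (eD i)))
      (fun i => od Q (eD i)) (fun j => oa Q (eA j)).

Lemma pull_wf Q : wf (rng eD) (rng eA) Q -> wf predT predT (pull Q).
Proof.
move=> [h1 h2]; split => // i i' j _ _ /=.
case e: (md Q (eD i)) => [y|] //=; case e': (md Q (eD i')) => [y'|] //=.
case: pickP => // j1 /eqP ej1 [ej]; case: pickP => // j2 /eqP ej2 [ej'].
subst; apply: ieD; apply: (h2 _ _ (eA j)); rewrite ?e ?e' ?ej2 //; apply: codom_f.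
Qed.

Lemma pull_good Q z : wf (rng eD) (rng eA) Q -> good (rng eD) (rng eA) Q z ->
  good predT predT (pull Q) (fun i => z.1 (eD i), fun j => z.2 (eA j)).
Proof.
move=> [w1 _] [g1 g2]; split.
  move=> i _ /=; have := g1 (eD i) (codom_f _ _); case e: (md Q (eD i)) => [y|] //=.
  have := w1 _ _ (codom_f _ _) e => /codomP[j ej]; rewrite ej pick_eA /=.
  by [].
move=> j _ h /=; apply: g2; first exact: codom_f.
move=> x /codomP[i ->] e; apply: (h i isT); by rewrite /= e /= pick_eA.
Qed.

End Transport.

Lemma corrE p (s a k : 'I_(p.+2)) : (val a == (val s + val k) %% p.+2)%N = (a == s + k).
Proof. by rewrite -val_eqE. Qed.

Lemma sum_neq0 (I : finType) (F : I -> algC) : \sum_i F i != 0 -> exists i, F i != 0.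
Proof.
move=> h; apply/existsP; apply: contraR h => /existsPn h.
by apply/eqP; apply: big1 => i _; apply/eqP; have := h i; rewrite negbK.
Qed.

Lemma prod_neq0 (I : finType) (F : I -> algC) : \prod_i F i != 0 -> forall i, F i != 0.
Proof.
move=> h i; apply: contra h => /eqP e; by rewrite (bigD1 i) //= e mul0r.
Qed.

Lemma natb_neq0 (b : bool) : (b%:R : algC) != 0 -> b.
Proof. by case: b => //; rewrite eqxx. Qed.

Section Decode.
Variables (p m n : nat).
Local Notation d := p.+2.
Local Notation G := 'I_d.

Definition cfg (m n : nat) (z : basis d m n) : ('I_m -> G) * ('I_n -> G) :=
  (fun i => z.1 i, fun j => z.2 j).

Lemma corr_of_proj q (k : 'I_q -> 'I_d) (Phi : vec d q q) w :
  (forall z, apply_op (pair_proj k) Phi z = Phi z) -> Phi w != 0 ->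
  forall i, w.2 i = w.1 i + k i.
Proof.
move=> hp; rewrite -hp /apply_op => /sum_neq0 [w' h] i.
move: h; rewrite mulf_eq0 negb_or => /andP[h _].
have := prod_neq0 h i; rewrite /Pi1 => /natb_neq0 /andP[_].
by rewrite corrE => /eqP.
Qed.

Definition dec_pat (sg : 'S_m) (tu : 'S_n) (k : 'I_(minn m n) -> 'I_d)
   (rD : 'I_m -> 'I_d) (rA : 'I_n -> 'I_d) : pat G 'I_m 'I_n :=
  Pat (fun x => omap (fun i : 'I_(minn m n) => tu (widen_ord (geq_minr m n) i))
                     (insub (val ((sg^-1)%g x))))
      (fun x => if (insub (val ((sg^-1)%g x)) : option 'I_(minn m n)) is Some i then k i
                else rD ((sg^-1)%g x))
      (fun y => rA ((tu^-1)%g y)).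

Lemma decode (psi : vec d m n) : is_pure psi ->
  exists Q : pat G 'I_m 'I_n, wf predT predT Q /\ forall z, psi z != 0 -> good predT predT Q (cfg z).
Proof.
move=> [_ [sg [tu [k [Phi [rD [rA [hp hpsi]]]]]]]].
exists (dec_pat sg tu k rD rA); split.
  split => // x x' y _ _ /=.
  case: insubP => // i _ vi; case: insubP => // i' _ vi' /= [e] [e'].
  have := perm_inj (etrans e (esym e')) => /(congr1 val) /= /val_inj ei; subst i'.
  have : nat_of_ord ((sg^-1)%g x) = nat_of_ord ((sg^-1)%g x') by rewrite -vi -vi'.
  by move/val_inj/perm_inj.
move=> z; rewrite hpsi /permvec /extend_basis /= mulf_eq0 negb_or => /andP[hPhi hfix].
have hc := corr_of_proj hp hPhi.
move: hfix => /natb_neq0 /andP[/forallP f1 /forallP f2].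
split.
  move=> x _ /=; case: insubP => [i _ vi|].
    have := hc i; rewrite !ffunE /=.
    have -> : widen_ord (geq_minl m n) i = (sg^-1)%g x by apply: val_inj.
    by rewrite permKV.
  rewrite -leqNgt => hq; have := f1 ((sg^-1)%g x); rewrite hq /= ffunE permKV.
  by move/eqP.
move=> y _ hy /=; case: (ltnP (val ((tu^-1)%g y)) (minn m n)) => hq.
  exfalso; pose i := Ordinal hq; apply: (hy (sg (widen_ord (geq_minl m n) i)) isT).
  rewrite /= permK insubT /=; congr Some.
  by rewrite -[y in RHS](permKV tu); congr (tu _); apply: val_inj.
have := f2 ((tu^-1)%g y); rewrite hq /= ffunE permKV.
by move/eqP.
Qed.
End Decode.

Lemma pmap_uniq_inj (T U : eqType) (f : T -> option U) (s : seq T) : uniq s ->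
  (forall x x' y, x \in s -> x' \in s -> f x = Some y -> f x' = Some y -> x = x') ->
  uniq (pmap f s).
Proof.
elim: s => //= x s IH /andP[nx us] h.
have h' : forall x0 x' y, x0 \in s -> x' \in s -> f x0 = Some y -> f x' = Some y -> x0 = x'.
  by move=> x0 x' y a b; apply: h; rewrite inE ?a ?b orbT.
case e: (f x) => [y|] /=; last exact: IH.
rewrite IH // andbT mem_pmap; apply/negP => /mapP [x' x's ex'].
have hx' : x' \in x :: s by rewrite inE x's orbT.
have ex := h x x' y (mem_head x s) hx' e (esym ex').
by move: nx; rewrite ex x's.
Qed.

Lemma pmap_nth (T U : eqType) (f : T -> option U) (s : seq T) x0 y0 :
  (forall x, x \in s -> f x != None) ->
  size (pmap f s) = size s /\
  forall i, (i < size s)%N -> f (nth x0 s i) = Some (nth y0 (pmap f s) i).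
Proof.
elim: s => [|x s IH] h //=.
have h' : forall x0, x0 \in s -> f x0 != None by move=> x1 a; apply: h; rewrite inE a orbT.
have [IH1 IH2] := IH h'.
have := h x; rewrite inE eqxx => /(_ isT); case e: (f x) => [y|] // _ /=.
split; first by rewrite IH1.
by case=> [|i] //= hi; apply: IH2.
Qed.

Section Encode.
Variables (p m n : nat).
Local Notation d := p.+2.
Local Notation G := 'I_d.
Variable Q : pat G 'I_m 'I_n.
Hypothesis wQ : wf predT predT Q.

Definition unm (y : 'I_n) := [forall x, md Q x != Some y].
Definition sL := [seq x <- enum 'I_m | md Q x != None].
Definition sD := sL ++ [seq x <- enum 'I_m | predC (fun x => md Q x != None) x].
Definition sLA := pmap (md Q) sL.
Definition sA := sLA ++ [seq y <- enum 'I_n | unm y].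

Lemma sD_perm : perm_eq sD (enum 'I_m).
Proof. by rewrite /sD /sL perm_filterC. Qed.

Lemma size_sD : size sD = m.
Proof. by rewrite (perm_size sD_perm) size_enum_ord. Qed.

Lemma uniq_sD : uniq sD.
Proof. by rewrite (perm_uniq sD_perm) enum_uniq. Qed.

Lemma sL_some x : x \in sL -> md Q x != None.
Proof. by rewrite mem_filter => /andP[]. Qed.

Lemma sLA_facts x0 y0 : size sLA = size sL /\
  forall i, (i < size sL)%N -> md Q (nth x0 sL i) = Some (nth y0 sLA i).
Proof. exact: pmap_nth sL_some. Qed.

Lemma uniq_sA : uniq sA.
Proof.
rewrite cat_uniq; apply/and3P; split.
- apply: pmap_uniq_inj; first by apply: filter_uniq; apply: enum_uniq.
  by case: wQ => _ h x x' y _ _; apply: h.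
- apply/hasPn => y; rewrite mem_filter => /andP[/forallP u _].
  rewrite mem_pmap; apply/negP => /mapP [x _ e].
  by have := u x; rewrite -e eqxx.
- by apply: filter_uniq; apply: enum_uniq.
Qed.

Lemma mem_sA y : y \in sA.
Proof.
rewrite mem_cat; case: (boolP (unm y)) => u.
  by rewrite mem_filter u mem_enum orbT.
move: u => /forallPn [x]; rewrite negbK => /eqP e.
rewrite mem_pmap; apply/orP; left; apply/mapP; exists x => //.
by rewrite mem_filter e mem_enum.
Qed.

Lemma size_sA : size sA = n.
Proof.
rewrite -(card_uniqP uniq_sA) -[RHS]card_ord; apply: eq_card => y.
by rewrite mem_sA.
Qed.

Lemma size_sLA : size sLA = size sL.
Proof.
rewrite /sLA size_pmap -[RHS]count_predT; apply: eq_in_count => x /sL_some.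
by case: (md Q x).
Qed.

Lemma size_sL_le : (size sL <= minn m n)%N.
Proof.
rewrite leq_min; apply/andP; split.
  by rewrite -[X in (_ <= X)%N]size_sD /sD size_cat leq_addr.
by rewrite -size_sLA -[X in (_ <= X)%N]size_sA /sA size_cat leq_addr.
Qed.


Definition fD (i : 'I_m) : 'I_m := nth i sD i.
Definition fA (j : 'I_n) : 'I_n := nth j sA j.

Lemma fD_inj : injective fD.
Proof.
move=> i i'; rewrite /fD (set_nth_default i' i) ?size_sD // => /eqP.
rewrite nth_uniq ?size_sD ?uniq_sD //; by move/eqP/val_inj.
Qed.

Lemma fA_inj : injective fA.
Proof.
move=> i i'; rewrite /fA (set_nth_default i' i) ?size_sA // => /eqP.
rewrite nth_uniq ?size_sA ?uniq_sA //; by move/eqP/val_inj.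
Qed.

Definition sg : 'S_m := perm fD_inj.
Definition tu : 'S_n := perm fA_inj.

Lemma F4 (i : 'I_m) (j : 'I_n) : val i = val j -> (val i < size sL)%N ->
  md Q (sg i) = Some (tu j).
Proof.
move=> ij hi; rewrite !permE /fD /fA /sD /sA !nth_cat hi size_sLA -ij hi.
by have [_ ->] := sLA_facts i j.
Qed.

Lemma F5 (i : 'I_m) : (size sL <= val i)%N -> md Q (sg i) = None.
Proof.
move=> hi; rewrite permE /fD /sD nth_cat ltnNge hi /=.
set F := filter _ _.
have hF : (val i - size sL < size F)%N.
  have := size_sD; rewrite /sD size_cat -/F => e.
  by rewrite ltn_subLR // e; exact: ltn_ord.
have := mem_nth i hF; rewrite mem_filter /= => /andP[].
by case: (md Q _).
Qed.

Lemma F6 (j : 'I_n) : (size sL <= val j)%N -> unm (tu j).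
Proof.
move=> hj; rewrite permE /fA /sA nth_cat size_sLA ltnNge hj /=.
set F := filter _ _.
have hF : (val j - size sL < size F)%N.
  have := size_sA; rewrite /sA size_cat size_sLA -/F => e.
  by rewrite ltn_subLR // e; exact: ltn_ord.
by have := mem_nth j hF; rewrite mem_filter /= => /andP[].
Qed.


Local Notation q := (minn m n).
Definition wD (i : 'I_q) : 'I_m := widen_ord (geq_minl m n) i.
Definition wA (i : 'I_q) : 'I_n := widen_ord (geq_minr m n) i.

Definition kk (i : 'I_q) : G :=
  if md Q (sg (wD i)) == Some (tu (wA i)) then od Q (sg (wD i))
  else oa Q (tu (wA i)) - od Q (sg (wD i)).
Definition rD (i : 'I_m) : G := od Q (sg i).
Definition rA (j : 'I_n) : G := oa Q (tu j).

Definition zz (w : basis d q q) : basis d m n :=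
  ([ffun x => if (insub (val ((sg^-1)%g x)) : option 'I_q) is Some i then w.1 i else rD ((sg^-1)%g x)],
   [ffun y => if (insub (val ((tu^-1)%g y)) : option 'I_q) is Some j then w.2 j else rA ((tu^-1)%g y)]).

Definition corr (w : basis d q q) := [forall i, w.2 i == w.1 i + kk i].

Lemma prod_natb (I : finType) (b : I -> bool) :
  \prod_i ((b i)%:R : algC) = ([forall i, b i])%:R.
Proof.
case: (boolP [forall i, b i]) => [/forallP h|/forallPn [i hi]].
  by apply: big1 => i _; rewrite h.
by rewrite (bigD1 i) //= (negbTE hi) mul0r.
Qed.

Theorem encode (phi : vec d m n) : unit_vec phi ->
  (forall z, phi z != 0 -> good predT predT Q (cfg z)) -> is_pure phi.
Proof.
move=> u hg; split => //.
pose Phi := fun w : basis d q q => phi (zz w) * (corr w)%:R.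
exists sg, tu, kk, Phi, rD, rA; split.
  move=> w; rewrite /apply_op (bigD1 w) //= big1 ?addr0.
    rewrite /pair_proj /Pi1.
    under eq_bigr => i _ do rewrite !eqxx /= corrE.
    rewrite prod_natb -/(corr w) /Phi; case: (corr w).
      by rewrite mul1r.
    by rewrite !mulr0.
  move=> w' nw; apply/eqP; apply: contraR nw => h.
  move: h; rewrite mulf_eq0 negb_or => /andP[h _].
  have hi := prod_neq0 h; apply/eqP.
  have e : forall i, (w.1 i == w'.1 i) && (w.2 i == w'.2 i).
    by move=> i; have := natb_neq0 (hi i) => /andP[/andP[-> ->]].
  case: w' {h hi} e => w1 w2 e; case: w e => v1 v2 e.
  by congr pair; apply/ffunP => i; have /andP[/eqP a /eqP b] := e i.
move=> z; rewrite /permvec /extend_basis /Phi /=.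
set om := (X in corr X).
set fx := ([forall i, _] && [forall j, _]).
have om1 : forall i, om.1 i = z.1 (sg (wD i)) by move=> i; rewrite /om /= !ffunE.
have om2 : forall i, om.2 i = z.2 (tu (wA i)) by move=> i; rewrite /om /= !ffunE.
have key : phi z != 0 -> corr om && fx.
  move=> /hg [g1 g2]; move: g1 g2; rewrite /cfg /= => g1 g2; apply/andP; split.
    apply/forallP => i; rewrite om1 om2 /kk.
    case: (eqVneq (md Q (sg (wD i))) (Some (tu (wA i)))) => [e|ne].
      by have := g1 (sg (wD i)) isT; rewrite e => ->.
    have hi : (size sL <= i)%N.
      rewrite leqNgt; apply/negP => hi; move/eqP: ne; apply; apply: F4 => //.
    have := g1 (sg (wD i)) isT; rewrite (F5 (i:=wD i) hi) /= => ->.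
    rewrite (g2 (tu (wA i)) isT); last first.
      by move=> x _; have /forallP := F6 (j:=wA i) hi => /(_ x) /eqP.
    by rewrite addrC subrK eqxx.
  apply/andP; split; apply/forallP => i; apply/implyP => hi; rewrite ffunE.
    have hi' : (size sL <= i)%N by apply: leq_trans hi; apply: size_sL_le.
    by have := g1 (sg i) isT; rewrite (F5 hi') /= => ->; rewrite /rD.
  have hi' : (size sL <= i)%N by apply: leq_trans hi; apply: size_sL_le.
  rewrite (g2 (tu i) isT) // => x _.
  by have /forallP := F6 hi' => /(_ x) /eqP.
have zzE : fx -> zz om = z.
  move=> /andP[/forallP f1 /forallP f2].
  apply: injective_projections; apply/ffunP => x; rewrite /zz /= ffunE.
    case: insubP => [i _ vi|].
      rewrite om1 /=; congr (z.1 _); rewrite -[x in RHS](permKV sg); congr (sg _).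
      by apply: val_inj.
    rewrite -leqNgt => hq; have := f1 ((sg^-1)%g x); rewrite hq ffunE /= permKV.
    by move/eqP.
  case: insubP => [i _ vi|].
    rewrite om2 /=; congr (z.2 _); rewrite -[x in RHS](permKV tu); congr (tu _).
    by apply: val_inj.
  rewrite -leqNgt => hq; have := f2 ((tu^-1)%g x); rewrite hq ffunE /= permKV.
  by move/eqP.
case: (boolP (corr om && fx)) => [/andP[c f]|h].
  by rewrite zzE // c f !mulr1.
have -> : phi z = 0 by apply/eqP; apply: contraR h; apply: key.
move: h; rewrite negb_and => /orP[] /negbTE ->; by rewrite ?mulr0 ?mul0r.
Qed.

End Encode.

Lemma cover (T A B : finType) (f : A -> T) (g : B -> T) : injective f -> injective g ->
  (forall a b, f a <> g b) -> (#|T| <= #|A| + #|B|)%N ->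
  forall x, (exists a, x = f a) \/ (exists b, x = g b).
Proof.
move=> fi gi fg hc x.
pose h (s : A + B) := match s with inl a => f a | inr b => g b end.
have hi : injective h.
  by case=> [a|b] [a'|b'] //= e; [rewrite (fi _ _ e) | case: (fg _ _ e) | case: (fg _ _ (esym e)) | rewrite (gi _ _ e)].
have := inj_card_onto hi; rewrite card_sum => /(_ hc x) /codomP [[a|b] ->]; by [left; exists a | right; exists b].
Qed.

Section Comb.
Variables (p m n m1 n1 : nat).
Local Notation d := p.+2.
Variables (eD : 'I_m1 -> 'I_m) (eA : 'I_n1 -> 'I_n)
    (cD : 'I_(m - m1) -> 'I_m) (cA : 'I_(n - n1) -> 'I_n).
Hypotheses (hm : (m1 <= m)%N) (hn : (n1 <= n)%N)
  (ieD : injective eD) (icD : injective cD) (dD : forall i j, eD i <> cD j)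
  (ieA : injective eA) (icA : injective cA) (dA : forall i j, eA i <> cA j).

Lemma coverD x : (exists a, x = eD a) \/ (exists b, x = cD b).
Proof. by apply: cover => //; rewrite !card_ord subnKC. Qed.
Lemma coverA x : (exists a, x = eA a) \/ (exists b, x = cA b).
Proof. by apply: cover => //; rewrite !card_ord subnKC. Qed.

Lemma restr_uniq (z z' : basis d m n) :
  restr cD cA z = restr cD cA z' -> restr eD eA z = restr eD eA z' -> z = z'.
Proof.
case=> e1 e2 [e3 e4]; apply: injective_projections; apply/ffunP => x.
  case: (coverD x) => [[a ->]|[b ->]]; [ move/ffunP: e3 => /(_ a) | move/ffunP: e1 => /(_ b)];
  by rewrite !ffunE.
case: (coverA x) => [[a ->]|[b ->]]; [ move/ffunP: e4 => /(_ a) | move/ffunP: e2 => /(_ b)];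
by rewrite !ffunE.
Qed.

Definition join (u w : basis d m n) : basis d m n :=
  ([ffun i => if i \in codom eD then w.1 i else u.1 i],
   [ffun j => if j \in codom eA then w.2 j else u.2 j]).

Lemma join_c u w : restr cD cA (join u w) = restr cD cA u.
Proof.
rewrite /restr /join; congr pair; apply/ffunP => i; rewrite !ffunE.
  by case: codomP => // [[a e]]; case: (dD (esym e)).
by case: codomP => // [[a e]]; case: (dA (esym e)).
Qed.

Lemma join_e u w : restr eD eA (join u w) = restr eD eA w.
Proof.
rewrite /restr /join; congr pair; apply/ffunP => i; rewrite !ffunE codom_f //.
Qed.

Lemma count1 (u w : basis d m n) :
  \sum_(z : basis d m n) ((restr cD cA z == restr cD cA u) && (restr eD eA z == restr eD eA w))%:R
  = 1 :> algC.
Proof.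
rewrite (bigD1 (join u w)) //= join_c join_e !eqxx /= big1 ?addr0 // => z nz.
case: eqP => //= e1; case: eqP => //= e2; case/eqP: nz.
by apply: restr_uniq; rewrite ?join_c ?join_e.
Qed.

End Comb.

Lemma good_eqz (G : zmodType) (Dt At : finType) UD UA (P : pat G Dt At) z z' :
  good UD UA P z -> (forall i, z.1 i = z'.1 i) -> (forall j, z.2 j = z'.2 j) -> good UD UA P z'.
Proof.
move=> [g1 g2] e1 e2; split.
  by move=> i u; have := g1 i u; rewrite -!e1; case: (md P i) => [j|]; rewrite ?e2.
by move=> j u h; rewrite -e2; apply: g2.
Qed.

Section Contr.
Variables (p m n m1 n1 : nat).
Local Notation d := p.+2.
Local Notation G := 'I_d.
Variables (eD : 'I_m1 -> 'I_m) (eA : 'I_n1 -> 'I_n)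
    (cD : 'I_(m - m1) -> 'I_m) (cA : 'I_(n - n1) -> 'I_n).
Hypotheses (hm : (m1 <= m)%N) (hn : (n1 <= n)%N)
  (ieD : injective eD) (icD : injective cD) (dD : forall i j, eD i <> cD j)
  (ieA : injective eA) (icA : injective cA) (dA : forall i j, eA i <> cA j).

Definition chi (f : basis d m1 n1 -> algC) (Psi : vec d m n) : vec d (m - m1) (n - n1) :=
  fun y => \sum_(u : basis d m n) (restr cD cA u == y)%:R * f (restr eD eA u) * Psi u.

Lemma contraction (Psi : vec d m n) (f : basis d m1 n1 -> algC) (R1 : pat G 'I_m1 'I_n1) :
  is_pure Psi -> wf predT predT R1 -> (forall x, f x != 0 -> good predT predT R1 (cfg x)) ->
  exists Q2 : pat G 'I_(m - m1) 'I_(n - n1), wf predT predT Q2 /\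
    forall y, chi f Psi y != 0 -> good predT predT Q2 (cfg y).
Proof.
move=> hP wR1 hf.
have [Q [wQ hQ]] := decode hP.
pose R := push eD eA R1.
have wR : wf (rng eD) (rng eA) R by apply: push_wf.
have [Q' [wQ' hQ']] := elim_pat (R := R) (MD := rng eD) (MA := rng eA) (UD := predT) (UA := predT) (Q := Q) (leqnn _) (fun _ _ => isT) (fun _ _ => isT) wR wQ.
have eD' : predD predT (rng eD) =1 rng cD.
  move=> x; rewrite /= /rng andbT; apply/idP/idP.
    by case: (coverD hm ieD icD dD x) => [[a ->]|[b ->]]; rewrite ?codom_f.
  move=> /codomP [b ->]; apply/codomP => -[a e]; exact: (dD (esym e)).
have eA' : predD predT (rng eA) =1 rng cA.
  move=> x; rewrite /= /rng andbT; apply/idP/idP.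
    by case: (coverA hn ieA icA dA x) => [[a ->]|[b ->]]; rewrite ?codom_f.
  move=> /codomP [b ->]; apply/codomP => -[a e]; exact: (dA (esym e)).
have wQ'' : wf (rng cD) (rng cA) Q' by apply: wf_ext wQ'.
exists (pull cD cA Q'); split; first exact: pull_wf.
move=> y; rewrite /chi =>  /sum_neq0 [u]; rewrite !mulf_eq0 !negb_or => /andP[/andP[hy hfu] hPu].
have ey : restr cD cA u = y by apply/eqP; apply: natb_neq0 hy.
have g1 := hf _ hfu.
have gR : good (rng eD) (rng eA) R (cfg u).
  apply: push_good => //; refine (good_eqz g1 _ _) => i /=; by rewrite ffunE.
have gQ' := hQ' _ gR (hQ _ hPu).
have gQ'' : good (rng cD) (rng cA) Q' (cfg u) by apply: good_ext gQ'.
have g := pull_good icA wQ'' gQ''; refine (good_eqz g _ _) => i /=; by rewrite -ey ffunE.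
Qed.

End Contr.

Section Assemble.
Variables (p m2 n2 : nat).
Local Notation d := p.+2.
Local Notation G := 'I_d.

Definition z0 : basis d m2 n2 := ([ffun _ => ord0], [ffun _ => ord0]).
Definition dflt : vec d m2 n2 := fun z => (z == z0)%:R.

Lemma dflt_pure : is_pure dflt.
Proof.
pose Q0 : pat G 'I_m2 'I_n2 := Pat (fun _ => None) (fun _ => ord0) (fun _ => ord0).
apply: (@encode p m2 n2 Q0); first by split.
  rewrite /unit_vec (bigD1 z0) //= big1 ?addr0 /dflt ?eqxx ?normr1 ?expr1n //.
  by move=> z /negbTE ->; rewrite normr0 expr0n.
move=> z; rewrite /dflt; case: (eqVneq z z0) => [-> _|_]; last by rewrite eqxx.
by split => [i _|j _ _]; rewrite /= ffunE.
Qed.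

Lemma norm2_ge0 (x : algC) : 0 <= `|x| ^+ 2.
Proof. by rewrite exprn_ge0. Qed.

Theorem assemble (T : finType) (a : T -> algC) (ch : T -> vec d m2 n2) (sigma : op d m2 n2) :
 (forall t, 0 <= a t) ->
 (forall t, exists Q : pat G 'I_m2 'I_n2, wf predT predT Q /\
      forall y, ch t y != 0 -> good predT predT Q (cfg y)) ->
 (forall y y', sigma y y' = \sum_t a t * (ch t y * (ch t y')^*)) ->
 let C := \sum_t a t * \sum_y `|ch t y| ^+ 2 in
 (C = 0 /\ forall y y', sigma y y' = 0) \/
 (0 < C /\ exists tau, valid_state tau /\ forall y y', sigma y y' = C * tau y y').
Proof.
move=> ha hQ hs C.
pose nt t := \sum_y `|ch t y| ^+ 2.
have nt_ge0 t : 0 <= nt t by apply: sumr_ge0 => y _; apply: norm2_ge0.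
have nt0 t : nt t = 0 -> forall y, ch t y = 0.
  move=> h y; have := psumr_eq0P (fun y _ => norm2_ge0 (ch t y)) h (i := y) isT.
  by move/eqP; rewrite expf_eq0 /= normr_eq0 => /eqP.
have term0 t : a t * nt t = 0 -> forall y y', a t * (ch t y * (ch t y')^*) = 0.
  move/eqP; rewrite mulf_eq0 => /orP[/eqP -> y y'|/eqP h y y']; first by rewrite mul0r.
  by rewrite (nt0 t h y) !mul0r mulr0.
have CE : C = \sum_t a t * nt t by [].
have C_ge0 : 0 <= C by rewrite CE; apply: sumr_ge0 => t _; apply: mulr_ge0.
case: (eqVneq C 0) => [C0|Cn0].
  left; split => // y y'; rewrite hs; apply: big1 => t _; apply: term0.
  apply: (psumr_eq0P (P := predT) (F := fun t => a t * nt t)) => //.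
    by move=> t0 _; apply: mulr_ge0.
have Cpos : 0 < C by rewrite lt_def Cn0 C_ge0.
right; split => //.
pose psi t : vec d m2 n2 := if nt t == 0 then dflt else fun y => ch t y / sqrtC (nt t).
pose w t := a t * nt t / C.
exists (fun y y' => sigma y y' / C); split; last first.
  by move=> y y'; rewrite mulrC divfK.
exists #|T|, (fun i => w (enum_val i)), (fun i => psi (enum_val i)); split; [|split; [|split]].
- move=> i; apply: divr_ge0; [apply: mulr_ge0; [exact: ha | exact: nt_ge0] | exact: ltW].
- by rewrite -(big_enum_val (A := T)) /= /w -mulr_suml -CE divff.
- move=> i; set t := enum_val i; rewrite /psi; case: eqP => [_|nz]; first exact: dflt_pure.
  have [Q [wQ hQt]] := hQ t; apply: (encode wQ).
    have s0 : 0 <= sqrtC (nt t) by rewrite sqrtC_ge0.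
    rewrite /unit_vec; under eq_bigr => y _ do rewrite normrM normfV (ger0_norm s0) exprMn exprVn sqrtCK.
    by rewrite -mulr_suml divff //; apply/eqP.
  by move=> y; rewrite mulf_eq0 negb_or => /andP[h _]; apply: hQt.
- move=> y y' /=; rewrite -(big_enum_val (A:=T) (fun t => w t * outer (psi t) y y')) /= hs mulr_suml; apply: eq_bigr => t _.
  rewrite /w /psi /outer; case: (eqVneq (nt t) 0) => [h|h].
    by rewrite h (nt0 t h y) !mul0r !mulr0 !mul0r.
  have s0 : 0 <= sqrtC (nt t) by rewrite sqrtC_ge0.
  have sn0 : sqrtC (nt t) != 0 by rewrite sqrtC_eq0.
  rewrite rmorphM fmorphV /= (conj_Creal (ger0_real s0)).
  set s := sqrtC (nt t) in s0 sn0 *.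
  have ns : nt t = s ^+ 2 by rewrite /s sqrtCK.
  rewrite [nt t in RHS]ns expr2.
  by field; rewrite sn0 Cn0.
Qed.
End Assemble.

Lemma sum_eq2 (T : finType) (a b : T) :
  \sum_x ((a == x)%:R * (b == x)%:R : algC) = (a == b)%:R.
Proof.
rewrite (bigD1 a) //= eqxx mul1r big1 ?addr0; first by rewrite eq_sym.
by move=> x; rewrite eq_sym => /negbTE ->; rewrite mul0r.
Qed.

Lemma natb_and (a b : bool) : ((a && b)%:R : algC) = a%:R * b%:R.
Proof. by case: a; case: b; rewrite ?mulr0 ?mulr1. Qed.

Lemma sum3 (T : finType) (a b : T) (c : bool) :
  \sum_y (((a == y) && (b == y) && c)%:R : algC) = ((a == b) && c)%:R.
Proof.
rewrite [RHS]natb_and -sum_eq2 mulr_suml; apply: eq_bigr => y _; by rewrite !natb_and.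
Qed.

Section Main.
Variables (p m n m1 n1 : nat).
Local Notation d := p.+2.
Variables (eD : 'I_m1 -> 'I_m) (eA : 'I_n1 -> 'I_n)
    (cD : 'I_(m - m1) -> 'I_m) (cA : 'I_(n - n1) -> 'I_n).
Hypotheses (hm : (m1 <= m)%N) (hn : (n1 <= n)%N)
  (ieD : injective eD) (icD : injective cD) (dD : forall i j, eD i <> cD j)
  (ieA : injective eA) (icA : injective cA) (dA : forall i j, eA i <> cA j).

Lemma S1 (X : op d m1 n1) (rho : op d m n) y y' :
  ptrace (mulop (tensor_id X eD eA cD cA) rho) eD eA cD cA y y' =
  \sum_u \sum_w ((restr cD cA u == y) && (restr cD cA w == y'))%:R *
     (X (restr eD eA w) (restr eD eA u) * rho u w).
Proof.
rewrite /ptrace /mulop /tensor_id.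
under eq_bigr => z _ do under eq_bigr => w _ do rewrite mulr_sumr.
rewrite exchange_big /=; under eq_bigr => w _ do rewrite exchange_big /=.
rewrite [LHS]exchange_big /=. apply eq_bigr => u _. apply eq_bigr => w _.
set K := (X in _ = X).
have -> : K = K * \sum_z ((restr cD cA z == restr cD cA u) && (restr eD eA z == restr eD eA w))%:R.
  by rewrite (count1 hm hn ieD icD dD ieA icA dA u w) mulr1.
rewrite /K mulr_sumr.
apply: eq_bigr => z _.
case: (eqVneq (restr cD cA z) (restr cD cA u)) => [e1|n1'];
  case: (eqVneq (restr eD eA z) (restr eD eA w)) => [e2|n2'];
  rewrite ?e1 ?e2 ?eqxx ?andbT ?andbF /= ?mulr0 ?mul0r ?mulr1 //;
  by rewrite ?mulr0 ?mul0r ?mulr1.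
Qed.

Variables (N : nat) (wt : 'I_N -> algC) (Ps : 'I_N -> vec d m n) (rho : op d m n).
Hypothesis hr : forall z z', rho z z' = \sum_(i < N) wt i * outer (Ps i) z z'.

Definition chE (f : basis d m1 n1 -> algC) (Psi : vec d m n) y y' u w :=
  ((restr cD cA u == y)%:R * f (restr eD eA u) * Psi u) *
  ((restr cD cA w == y')%:R * (f (restr eD eA w))^* * (Psi w)^*).

Lemma chi_prod f Psi y y' :
  chi eD eA cD cA f Psi y * (chi eD eA cD cA f Psi y')^* = \sum_u \sum_w chE f Psi y y' u w.
Proof.
rewrite /chi rmorph_sum big_distrlr; apply: eq_bigr => u _; apply: eq_bigr => w _.
by rewrite /chE !rmorphM /= conjC_nat.
Qed.

Lemma chi_prod' a f Psi y y' :
  a * (chi eD eA cD cA f Psi y * (chi eD eA cD cA f Psi y')^*) = \sum_u \sum_w a * chE f Psi y y' u w.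
Proof.
rewrite chi_prod mulr_sumr; apply: eq_bigr => u _; by rewrite mulr_sumr.
Qed.

Section Meas.
Variables (M : nat) (c : 'I_M -> algC) (ps : 'I_M -> vec d m1 n1) (P : op d m1 n1).
Hypothesis hP : forall x x', P x x' = \sum_(j < M) c j * outer (ps j) x x'.

Definition chM (t : 'I_N * 'I_M) := chi eD eA cD cA (fun x => (ps t.2 x)^*) (Ps t.1).

Lemma sigma_formula y y' :
  ptrace (mulop (tensor_id P eD eA cD cA) rho) eD eA cD cA y y' =
  \sum_t (wt t.1 * c t.2) * (chM t y * (chM t y')^*).
Proof.
rewrite S1.
under [RHS]eq_bigr => t _ do rewrite chi_prod'.
rewrite [RHS]exchange_big /=; under [RHS]eq_bigr => u _ do rewrite exchange_big /=.
apply: eq_bigr => u _; apply: eq_bigr => w _.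
rewrite hP hr mulr_suml mulr_sumr.
transitivity (\sum_(j < M) \sum_(i < N) ((restr cD cA u == y) && (restr cD cA w == y'))%:R *
   (c j * outer (ps j) (restr eD eA w) (restr eD eA u) * (wt i * outer (Ps i) u w))).
  by apply: eq_bigr => j _; rewrite !mulr_sumr.
rewrite exchange_big /= pair_bigA /=.
apply: eq_bigr => t _.
rewrite /chE /outer natb_and conjCK; ring.
Qed.
End Meas.

Definition chT (t : 'I_N * basis d m1 n1) := chi eD eA cD cA (fun x => (x == t.2)%:R) (Ps t.1).

Lemma marg_formula y y' :
  ptrace rho eD eA cD cA y y' = \sum_t wt t.1 * (chT t y * (chT t y')^*).
Proof.
rewrite /ptrace.
under [RHS]eq_bigr => t _ do rewrite chi_prod'.
rewrite [RHS]exchange_big /=; under [RHS]eq_bigr => u _ do rewrite exchange_big /=.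
apply: eq_bigr => u _; apply: eq_bigr => w _.
rewrite hr mulr_sumr.
transitivity (\sum_(i < N) \sum_(x : basis d m1 n1) ((restr cD cA u == y)%:R * (restr cD cA w == y')%:R *
   ((restr eD eA u == x)%:R * (restr eD eA w == x)%:R)) * (wt i * outer (Ps i) u w)).
  apply: eq_bigr => i _; rewrite -mulr_suml -mulr_sumr sum_eq2 !natb_and; ring.
rewrite pair_bigA; apply: eq_bigr => t _; rewrite /chE /outer conjC_nat /=; ring.
Qed.

Lemma marg_trace : \sum_(i < N) wt i = 1 -> (forall i, unit_vec (Ps i)) ->
  \sum_t wt t.1 * \sum_y `|chT t y| ^+ 2 = 1.
Proof.
move=> hw hu.
transitivity (\sum_y ptrace rho eD eA cD cA y y).
  under [RHS]eq_bigr => y _ do rewrite marg_formula.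
  rewrite [RHS]exchange_big /=; apply: eq_bigr => t _; rewrite mulr_sumr.
  by apply: eq_bigr => y _; rewrite normCK.
rewrite /ptrace exchange_big /=; under eq_bigr => z _ do rewrite exchange_big /=.
transitivity (\sum_z \sum_w (z == w)%:R * rho z w).
  apply: eq_bigr => z _; apply: eq_bigr => w _; rewrite -mulr_suml; congr (_ * _).
  rewrite sum3; suff -> : ((restr cD cA z == restr cD cA w) && (restr eD eA z == restr eD eA w)) = (z == w) by [].
  apply/idP/idP.
    by move=> /andP[/eqP a /eqP b]; apply/eqP; apply: (restr_uniq hm hn ieD icD dD ieA icA dA).
  by move/eqP ->; rewrite !eqxx.
transitivity (\sum_z rho z z).
  apply: eq_bigr => z _; rewrite (bigD1 z) //= eqxx mul1r big1 ?addr0 //.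
  by move=> w; rewrite eq_sym => /negbTE ->; rewrite mul0r.
under eq_bigr => z _ do rewrite hr.
rewrite exchange_big /= -hw; apply: eq_bigr => i _.
rewrite -mulr_sumr; have := hu i; rewrite /unit_vec => h.
rewrite -[RHS]mulr1 -h; congr (_ * _); apply: eq_bigr => z _; by rewrite normCK.
Qed.

End Main.

Theorem main_aux (p m n m1 n1 : nat) (rho : op p.+2 m n)
    (eD : 'I_m1 -> 'I_m) (eA : 'I_n1 -> 'I_n)
    (cD : 'I_(m - m1) -> 'I_m) (cA : 'I_(n - n1) -> 'I_n) :
  (m1 <= m)%N -> (n1 <= n)%N ->
  injective eD -> injective cD -> (forall i j, eD i <> cD j) ->
  injective eA -> injective cA -> (forall i j, eA i <> cA j) ->
  valid_state rho ->
  (forall P : op p.+2 m1 n1, measurement_element P ->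
     let sigma := ptrace (mulop (tensor_id P eD eA cD cA) rho) eD eA cD cA in
     (forall y y', sigma y y' = 0) \/
     exists (c : algC) (tau : op p.+2 (m - m1) (n - n1)),
       0 < c /\ valid_state tau /\ forall y y', sigma y y' = c * tau y y')
  /\ valid_state (ptrace rho eD eA cD cA).
Proof.
move=> hm hn ieD icD dD ieA icA dA [N [wt [Ps [hw0 [hw1 [hpure hr]]]]]].
split.
  move=> P [K [Pss [i0 [[_ [_ hcone]] hPi]]]] sigma.
  have [M [c [ps [hc0 [hps hPs]]]]] := hcone i0.
  have hP : forall x x', P x x' = \sum_j c j * outer (ps j) x x'.
    by move=> x x'; rewrite hPi hPs.
  have := @assemble p (m - m1) (n - n1) ('I_N * 'I_M)%type (fun t => wt t.1 * c t.2)
    (chM eD eA cD cA Ps ps) sigma.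
  case.
  - by move=> t; apply: mulr_ge0.
  - move=> t; have [R1 [wR1 hR1]] := decode (hps t.2).
    apply: (contraction hm hn ieD icD dD ieA icA dA (hpure t.1) wR1).
    by move=> x; rewrite conjC_eq0; apply: hR1.
  - by move=> y y'; apply: (sigma_formula hm hn ieD icD dD ieA icA dA hr hP).
  - by move=> [_ h]; left.
  - by move=> [Cpos [tau [vt ht]]]; right; exists (\sum_t wt t.1 * c t.2 * \sum_y `|chM eD eA cD cA Ps ps t y| ^+ 2), tau.
have := @assemble p (m - m1) (n - n1) ('I_N * basis p.+2 m1 n1)%type (fun t => wt t.1)
    (chT eD eA cD cA Ps) (ptrace rho eD eA cD cA).
have htr := marg_trace hm hn ieD icD dD ieA icA dA hr hw1 (fun i => (hpure i).1).
case.
- by move=> t; apply: hw0.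
- move=> t; pose R1 : pat 'I_p.+2 'I_m1 'I_n1 := Pat (fun _ => None) (fun i => t.2.1 i) (fun j => t.2.2 j).
  have wR1 : wf predT predT R1 by [].
  apply: (contraction hm hn ieD icD dD ieA icA dA (hpure t.1) wR1).
  move=> x; case: (eqVneq x t.2) => [-> _|]; last by rewrite eqxx.
  by split => [i _|j _ _].
- by move=> y y'; apply: (marg_formula eD eA cD cA hr).
- by move=> [C0 _]; move: C0; rewrite htr => /eqP; rewrite oner_eq0.
move=> [_ [tau [[N' [w' [ps' [h0 [h1 [h2 h3]]]]]] ht]]].
exists N', w', ps'; split; [|split; [|split]] => //.
by move=> y y'; rewrite ht htr mul1r h3.
Qed.


Unset Implicit Arguments. Set Strict Implicit. Set Printing Implicit Defensive.

Theorem mainTheorem2 (d m n m1 n1 : nat) (rho : op d m n)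
    (eD : 'I_m1 -> 'I_m) (eA : 'I_n1 -> 'I_n)
    (cD : 'I_(m - m1) -> 'I_m) (cA : 'I_(n - n1) -> 'I_n) :
  (2 <= d)%N -> (m1 <= m)%N -> (n1 <= n)%N ->
  injective eD -> injective cD -> (forall i j, eD i <> cD j) ->
  injective eA -> injective cA -> (forall i j, eA i <> cA j) ->
  valid_state rho ->
  (forall P : op d m1 n1, measurement_element P ->
     let sigma := ptrace (mulop (tensor_id P eD eA cD cA) rho) eD eA cD cA in
     (forall y y', sigma y y' = 0) \/
     exists (c : algC) (tau : op d (m - m1) (n - n1)),
       0 < c /\ valid_state tau /\ forall y y', sigma y y' = c * tau y y')
  /\ valid_state (ptrace rho eD eA cD cA).
Proof.
move: rho; case: d => [|[|p]] rho // _.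
exact: main_aux.
Qed.
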